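(* Let $n\geq1$, $w=e^{2\pi i/n}$ and $F=(w^{ij}/\sqrt n)_{i,j=0}^{n-1}$. Let $\Phi$ be the map on $n\times n$ circulant complex matrices defined by $\Phi\big((x_{j-i})_{i,j}\big)=\big((Fx)_{j-i}\big)_{i,j}$, where $x=(x_0,\ldots,x_{n-1})^t$ is the first row. Then $\Phi$ restricts to a bijection from $C^{circ}_n(\infty)$ onto $C^{circ}_n(\infty)$, and this bijection maps $C^{circ}_n(2)$ onto $C^{circ,sa}_n(\infty)$. More precisely, for a circulant $H$: $H\in\sqrt n\,U(n)$ iff all entries of $\Phi(H)$ have modulus one, and $H\in\sqrt n\,O(n)$ (real orthogonal times $\sqrt n$) iff $\Phi(H)$ is self-adjoint with all entries of modulus one.
   Context: A complex Hadamard matrix of order $n$ is a matrix $H$ with $|H_{ij}|=1$ and $H/\sqrt n$ unitary. $C^{circ}_n(\infty)$ is the set of $n\times n$ circulant complex Hadamard matrices ($H_{ij}$ depends only on $j-i$ mod $n$); $C^{circ}_n(2)$ is the subset of those with entries in $\{\pm1\}$; $C^{circ,sa}_n(\infty)$ is the subset of self-adjoint (Hermitian) ones. *)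

(* Defs.v *)
From HB Require Import structures.
From mathcomp Require Import all_boot all_order all_algebra.
From mathcomp Require Import algC.
Set Implicit Arguments. Unset Strict Implicit. Unset Printing Implicit Defensive.
Import Order.TTheory GRing.Theory Num.Theory.
Local Open Scope ring_scope.

Lemma ord_pos n (i : 'I_n) : (0 < n)%N.
Proof. exact: leq_ltn_trans (leq0n _) (ltn_ord i). Qed.

Definition cdiff n (i j : 'I_n) : 'I_n :=
  Ordinal (ltn_pmod (j + n - i)%N (ord_pos i)).

Definition circ n (x : 'rV[algC]_n) : 'M[algC]_n :=
  \matrix_(i, j) x 0 (cdiff i j).

(* w = e^{2 pi i / n}: n.-root (-1) is the n-th root of -1 with maximal real
   part among those with nonnegative imaginary part, i.e. e^{i pi / n}. *)
Definition omega (n : nat) : algC := (n.-root (-1)) ^+ 2.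

Definition fourier n : 'M[algC]_n :=
  \matrix_(i, j) (omega n ^+ (i * j) / sqrtC n%:R).

Definition fourier_vec n (x : 'rV[algC]_n) : 'rV[algC]_n :=
  \row_i \sum_j fourier n i j * x 0 j.

(* Phi (circ x) = circ (F x) *)
Definition Phi n (x : 'rV[algC]_n) : 'M[algC]_n := circ (fourier_vec x).

Definition adjmx n (A : 'M[algC]_n) : 'M[algC]_n := (map_mx (fun z : algC => z^*) A)^T.

Definition unitary n (U : 'M[algC]_n) : Prop :=
  U *m adjmx U = 1%:M /\ adjmx U *m U = 1%:M.

Definition real_orthogonal n (O : 'M[algC]_n) : Prop :=
  (forall i j, O i j \is Num.real) /\ O *m O^T = 1%:M /\ O^T *m O = 1%:M.

Definition in_sqrtU n (H : 'M[algC]_n) : Prop :=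
  exists U, unitary U /\ H = sqrtC n%:R *: U.

Definition in_sqrtO n (H : 'M[algC]_n) : Prop :=
  exists O, real_orthogonal O /\ H = sqrtC n%:R *: O.

Definition unimodular n (H : 'M[algC]_n) : Prop := forall i j, `|H i j| = 1.

Definition complex_hadamard n (H : 'M[algC]_n) : Prop :=
  unimodular H /\ unitary ((sqrtC n%:R)^-1 *: H).

Definition Ccirc n (x : 'rV[algC]_n) : Prop := complex_hadamard (circ x).
Definition Ccirc2 n (x : 'rV[algC]_n) : Prop :=
  Ccirc x /\ forall i j, circ x i j = 1 \/ circ x i j = -1.
Definition Ccirc_sa n (x : 'rV[algC]_n) : Prop :=
  Ccirc x /\ adjmx (circ x) = circ x.

(* Main.v *)
Require Import Defs.
From HB Require Import structures.
From mathcomp Require Import all_boot all_order all_algebra.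
From mathcomp Require Import algC cyclotomic.
From mathcomp Require Import ring lra zify.
Import Order.TTheory GRing.Theory Num.Theory.
Local Open Scope ring_scope.

Lemma mono_R (c s a b : algR) : c^+2+s^+2 = 1 -> a^+2+b^+2= 1 -> 0<=s -> 0<b -> 0 <= c*b + a*s -> c*a - s*b < c.
Proof.
move=> h1 h2 hs hb h3.
have ha : a < 1 by nra.
have key : b * (c - (c*a - s*b)) = (1 - a) * (c*b + a*s + s) by nra.
have hp : 0 < c*b + a*s + s.
  have [s0|sp] := eqVneq s 0.
    subst s; nra.
  have : 0 < s by rewrite lt_neqAle eq_sym sp.
  nra.
nra.
Qed.

Lemma cross_R (c1 s1 c2 s2 : algR) : c1^+2+s1^+2 = 1 -> c2^+2+s2^+2= 1 -> 0<=s1 -> 0<=s2 -> c1 < c2 -> 0 <= s1*c2 - c1*s2.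
Proof.
move=> h1 h2 hs1 hs2 hc.
have [c1p|c1n] := lerP 0 c1.
  have : s2 <= s1 by nra.
  nra.
have [c2p|c2n] := lerP 0 c2; first by nra.
have : s1 <= s2 by nra.
nra.
Qed.
Lemma algR_le (x y : algR) : (x <= y) = (val x <= val y). Proof. by []. Qed.
Lemma algR_lt (x y : algR) : (x < y) = (val x < val y). Proof. by []. Qed.

Lemma unit_ReIm (u : algC) : `|u| = 1 -> 'Re u ^+ 2 + 'Im u ^+ 2 = 1.
Proof. by move=> h; rewrite -normC2_Re_Im h expr1n. Qed.

Lemma mono (u y : algC) : `|u| = 1 -> `|y| = 1 -> 0 <= 'Im u -> 0 < 'Im y ->
  0 <= 'Im (u*y) -> 'Re (u*y) < 'Re u.
Proof.
move=> nu ny hs hb h3; rewrite ReM; rewrite ImM in h3.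
set c := in_algR (Creal_Re u); set s := in_algR (Creal_Im u).
set a := in_algR (Creal_Re y); set b := in_algR (Creal_Im y).
have := @mono_R c s a b.
rewrite !algR_le !algR_lt /=.
by apply => //; apply/val_inj; rewrite /= unit_ReIm.
Qed.

Lemma cross (r w : algC) : `|r| = 1 -> `|w| = 1 -> 0 <= 'Im r -> 0 <= 'Im w ->
  'Re r < 'Re w -> 0 <= 'Im (r * w^*).
Proof.
move=> nr nw h1 h2 h3; rewrite ImM Re_conj Im_conj.
set c1 := in_algR (Creal_Re r); set s1 := in_algR (Creal_Im r).
set c2 := in_algR (Creal_Re w); set s2 := in_algR (Creal_Im w).
have H := @cross_R c1 s1 c2 s2.
rewrite !algR_le !algR_lt /= in H.
rewrite mulrN addrC ['Re w * _]mulrC.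
by apply: H => //; apply/val_inj; rewrite /= unit_ReIm.
Qed.

Lemma one_neqN1 : (1 : algC) != -1.
Proof. by rewrite -addr_eq0 -[1 + 1]/(2%:R) pnatr_eq0. Qed.

Lemma unit_real (z : algC) : `|z| = 1 -> 'Im z = 0 -> z = 1 \/ z = -1.
Proof.
move=> nz /Creal_ImP zR; rewrite (realEsign zR) nz mulr1.
by case: (z < 0); [right|left].
Qed.

Arguments unit_real {z}.

Lemma discrete (f : nat -> bool) a b : (a <= b)%N -> ~~ f a -> f b ->
  exists t, ~~ f t /\ f t.+1.
Proof.
move=> + nfa; elim: b => [|b IH] hab fb.
  by move: hab; rewrite leqn0 => /eqP ha; rewrite ha fb in nfa.
case fbb: (f b); last by exists b; rewrite fbb.
move: hab; rewrite leq_eqVlt => /orP[/eqP ha|hab]; first by rewrite ha fb in nfa.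
exact: IH.
Qed.

Lemma real_neq0_lt (x : algC) : x \is Num.real -> x != 0 -> ~~ (0 < x) -> x < 0.
Proof.
move=> xR x0; rewrite real_ltNge ?rpred0 // negbK => h.
by rewrite lt_neqAle x0 h.
Qed.

Lemma crossing (r z : algC) (d : nat) : `|r| = 1 -> `|z| = 1 -> 0 < 'Im r ->
  r ^+ d = -1 -> (forall i, 'Im (z * r ^+ i) != 0) ->
  exists w, [/\ `|w| = 1, 0 < 'Im w, 'Re r < 'Re w & exists t, w = z * r ^+ t].
Proof.
move=> nr nz hr rd hI.
pose f i := 0 < 'Im (z * r ^+ i).
have neg i : ~~ f i -> 'Im (z * r ^+ i) < 0.
  by move=> h; apply: real_neq0_lt; rewrite ?Creal_Im ?hI.
have flip i : 'Im (z * r ^+ (i + d)) = - 'Im (z * r ^+ i).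
  by rewrite exprD rd mulrN1 mulrN raddfN.
have [t [nft ft1]] : exists t, ~~ f t /\ f t.+1.
  case f0: (f 0).
    apply: (@discrete f d (d + d)); first by rewrite leq_addr.
      by rewrite /f -(add0n d) flip oppr_gt0 -real_leNgt ?Creal_Im ?rpred0 // ltW.
    by rewrite /f flip -(add0n d) flip opprK.
  apply: (@discrete f 0 d) => //; first by rewrite f0.
  by rewrite /f -(add0n d) flip oppr_gt0 neg ?f0.
have nzt : `|z * r ^+ t| = 1 by rewrite normrM normrX nr expr1n nz mulr1.
exists (z * r ^+ t.+1); split => //; last by exists t.+1.
- by rewrite normrM normrX nr expr1n nz mulr1.
have eqr : (z * r ^+ t.+1) * (z * r ^+ t)^* = r.
  by rewrite exprS mulrCA -mulrA -normCK nzt expr1n mulr1.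
rewrite -{1}eqr; apply: mono.
- by rewrite normrM normrX nr expr1n nz mulr1.
- by rewrite norm_conjC.
- exact: ltW.
- by rewrite Im_conj oppr_gt0 neg.
- by rewrite eqr ltW.
Qed.

Lemma m1_R (c s : algR) : c^+2+s^+2 = 1 -> c <= -1 -> c = -1 /\ s = 0.
Proof.
move=> h hc; have c1 : c = -1 by apply/le_anti; rewrite hc /=; nra.
split => //; apply/eqP; rewrite -(sqrf_eq0 s); apply/eqP.
by move: h; rewrite c1 => h; lra.
Qed.

Lemma Re_le_m1 (y : algC) : `|y| = 1 -> 'Re y <= -1 -> y = -1.
Proof.
move=> ny hy.
have [] := @m1_R (in_algR (Creal_Re y)) (in_algR (Creal_Im y)).
- by apply/val_inj; rewrite /= unit_ReIm.
- by rewrite algR_le /=.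
move=> /(congr1 val) /= h1 /(congr1 val) /= h2.
by rewrite [y]Crect h1 h2 mulr0 addr0.
Qed.

Arguments Re_le_m1 {y}.

Lemma unit_of_root (z : algC) k : (0 < k)%N -> z ^+ k = 1 -> `|z| = 1.
Proof.
move=> k0 zk; apply/eqP; rewrite -(pexpr_eq1 k0) ?normr_ge0 //.
by rewrite -normrX zk normr1.
Qed.

Lemma sq_pm1 (x : algC) : x ^+ 2 = 1 -> x = 1 \/ x = -1.
Proof. by move/eqP; rewrite sqrf_eq1 => /orP[] /eqP; [left|right]. Qed.

Lemma omega_prim n : (0 < n)%N -> n.-primitive_root (omega n).
Proof.
move=> n0; case: n n0 => [//|[_|n _]].
  rewrite /omega root1C sqrrN expr1n.
  by apply/andP; split => //; apply/forallP => -[[|k] hk]; rewrite ?unity_rootE ?expr1n ?eqxx.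
set N := n.+2.
have N1 : (1 < N)%N by [].
have N0 : (0 < N)%N by [].
pose r : algC := N.-root (-1).
have rN : r ^+ N = -1 by rewrite /r rootCK.
have nr : `|r| = 1 by rewrite /r norm_rootC normrN1 rootC1.
have Imr : 0 <= 'Im r by apply: Im_rootC_ge0.
have rmax y : y ^+ N = -1 -> 0 <= 'Im y -> 'Re y <= 'Re r.
  by move=> yN yI; apply: rootC_Re_max.
have [rho prho] := C_prim_root_exists (ltn0Sn (N + N).-1).
rewrite /= -/N addSn /= in prho.
have rho2N : rho ^+ (N + N) = 1 by apply: prim_expr_order.
have nrho : `|rho| = 1 by apply: unit_of_root rho2N.
have rhoN : rho ^+ N = -1.
  have : (rho ^+ N) ^+ 2 = 1 by rewrite -exprM mulnC mul2n -addnn.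
  case/sq_pm1 => // h; exfalso.
  have := prim_order_dvd prho N; rewrite h eqxx.
  move/(dvdn_leq N0); lia.
have rhoNd d : (0 < d < N)%N -> rho ^+ (d + d) != 1.
  move=> /andP[d0 dN]; rewrite -(prim_order_dvd prho).
  apply/negP => /(dvdn_leq _); lia.
have Imr0 : 0 < 'Im r.
  rewrite lt_neqAle Imr andbT eq_sym; apply/negP => /eqP /(unit_real nr) [] r1.
    by move: rN; rewrite r1 expr1n => /eqP; rewrite (negbTE one_neqN1).
  pose y := if 0 <= 'Im rho then rho else rho^*.
  have yN : y ^+ N = -1 by rewrite /y; case: ifP => _; rewrite ?rhoN // -rmorphXn rhoN rmorphN1.
  have yI : 0 <= 'Im y.
    rewrite /y; case: ifP => // h; rewrite Im_conj oppr_ge0 ltW //.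
    by rewrite real_ltNge ?Creal_Im ?rpred0 ?h.
  have ny : `|y| = 1 by rewrite /y; case: ifP; rewrite ?norm_conjC.
  have Rem1 : 'Re (-1 : algC) = -1 by apply/Creal_ReP; rewrite rpredN rpred1.
  have := rmax _ yN yI; rewrite r1 Rem1 => /(Re_le_m1 ny) ym1.
  have : y ^+ 2 = 1 by rewrite ym1 sqrrN expr1n.
  rewrite /y; case: ifP => _; last first.
    by rewrite -rmorphXn => /(congr1 Num.conj); rewrite conjCK rmorph1; apply/eqP; apply: (rhoNd 1).
  by apply/eqP; apply: (rhoNd 1).
have r2N : (r ^+ 2) ^+ N = 1 by rewrite -exprM mulnC exprM rN sqrrN expr1n.
have [m pm mN] := prim_order_exists N0 r2N.
have m0 := prim_order_gt0 pm.
have [mE|mneq] := eqVneq m N; first by move: pm; rewrite mE.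
exfalso.
have mlt : (m < N)%N by rewrite ltn_neqAle mneq dvdn_leq.
have r2m : r ^+ (m + m) = 1 by rewrite addnn -mul2n exprM prim_expr_order.
have [d [d0 dN rd]] : exists d, [/\ (0 < d)%N, (d < N)%N & r ^+ d = -1].
  have : (r ^+ m) ^+ 2 = 1 by rewrite -exprM mulnC mul2n -addnn.
  case/sq_pm1 => h; last by exists m.
  exists (N %% m)%N; split.
  - rewrite lt0n; apply/negP => /eqP h0.
    by move: rN; rewrite -(GRing.expr_mod N h) h0 expr0 => /eqP; rewrite (negbTE one_neqN1).
  - by apply: (ltn_trans (ltn_pmod _ m0)).
  - by rewrite GRing.expr_mod.
have dd : (0 < d < N)%N by rewrite d0 dN.
have hI i : 'Im (rho * r ^+ i) != 0.
  apply/negP => /eqP h0.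
  have nri : `|rho * r ^+ i| = 1 by rewrite normrM normrX nr expr1n nrho mulr1.
  have sq : (rho * r ^+ i) ^+ 2 = 1 by case: (unit_real nri h0) => ->; rewrite ?sqrrN expr1n.
  have e1 : ((r ^+ i) ^+ 2) ^+ d = 1.
    have -> : ((r ^+ i) ^+ 2) ^+ d = ((r ^+ d) ^+ 2) ^+ i.
      by rewrite -!exprM; congr (_ ^+ _); lia.
    by rewrite rd sqrrN !expr1n.
  have := rhoNd d dd; rewrite addnn -mul2n exprM.
  rewrite exprMn in sq.
  have : (rho ^+ 2 * (r ^+ i) ^+ 2) ^+ d = 1 by rewrite sq expr1n.
  by rewrite exprMn e1 mulr1 => ->; rewrite eqxx.
have [w [nw Imw Rew [t wE]]] := @crossing r rho d nr nrho Imr0 rd hI.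
have w2N : (w ^+ N) ^+ 2 = 1.
  rewrite wE -exprM exprMn; have -> : (N * 2 = N + N)%N by lia.
  by rewrite rho2N mul1r exprAC exprD rN mulrNN mulr1 expr1n.
case/sq_pm1: w2N => wN.
  pose y := r * w^*.
  have yN : y ^+ N = -1 by rewrite /y exprMn -rmorphXn wN rmorph1 mulr1.
  have yI : 0 <= 'Im y by apply: cross => //; apply: ltW.
  have := rmax _ yN yI.
  have eqr : y * w = r by rewrite /y -mulrA mulrC -[w^* * w]mulrC -normCK nw expr1n mul1r.
  rewrite -{1}eqr; apply/negP; rewrite -real_ltNge ?Creal_Re //.
  apply: mono => //; first by rewrite normrM norm_conjC nw nr mulr1.
  by rewrite eqr.
have := rmax _ wN (ltW Imw).
by move=> h; have := lt_le_trans Rew h; rewrite ltxx.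
Qed.

Definition rv {n} (k : 'I_n) : 'I_n := Ordinal (ltn_pmod (n - k)%N (ord_pos k)).

Lemma dvd_2n (n m : nat) : (0 < m < n + n)%N -> (n %| m)%N = (m == n).
Proof.
move=> /andP[m0 m2]; apply/idP/eqP => [/dvdnP [q hq]|->]; last exact: dvdnn.
subst m; have : (q < 2)%N by nia.
move=> hq2; have [q0|q1] : q = 0%N \/ q = 1%N by lia.
  by rewrite q0 mul0n in m0.
by rewrite q1 mul1n.
Qed.

Lemma dvd_rv n (i k : 'I_n) : (n %| i + k)%N = (i == rv k).
Proof.
have kn := ltn_ord k; have iin := ltn_ord i.
apply/idP/eqP => [h|->]; first apply/val_inj => /=.
  case: (posnP k) => [k0|k0].
    move: h; rewrite k0 addn0 subn0 modnn => h.
    by apply/eqP; rewrite -leqn0 leqNgt; apply/negP => i0; move: h; rewrite dvd_2n ?i0 /=; lia.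
  rewrite modn_small; last lia.
  by move: h; rewrite dvd_2n; [move/eqP; lia | lia].
case: (posnP k) => [k0|k0].
  by rewrite /rv /= k0 subn0 modnn addn0 dvdn0.
by rewrite /rv /= modn_small ?subnK ?dvdnn //; lia.
Qed.

Lemma rvK n : involutive (@rv n).
Proof.
move=> k; apply/eqP; rewrite eq_sym -dvd_rv addnC dvd_rv //.
Qed.

Lemma rv_add n (k : 'I_n) : (n %| rv k + k)%N.
Proof. by rewrite dvd_rv. Qed.

Lemma sum_w n a : (0 < n)%N ->
  \sum_(j < n) omega n ^+ (j * a) = if (n %| a)%N then n%:R else 0.
Proof.
move=> hn; have pw := @omega_prim n hn.
have wa : omega n ^+ a ^+ n = 1 by rewrite -exprM mulnC exprM (prim_expr_order pw) expr1n.
case: ifP => h.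
  rewrite (eq_bigr (fun _ => 1)) ?sumr_const ?card_ord //.
  move=> j _; rewrite mulnC exprM.
  by move: h; rewrite (prim_order_dvd pw) => /eqP ->; rewrite expr1n.
have q1 : omega n ^+ a != 1 by rewrite -(prim_order_dvd pw) h.
rewrite (eq_bigr (fun j : 'I_n => (omega n ^+ a) ^+ j)); last first.
  by move=> j _; rewrite -exprM mulnC.
have := subrX1 (omega n ^+ a) n; rewrite wa subrr => /esym/eqP.
by rewrite mulf_eq0 subr_eq0 (negbTE q1) /= => /eqP.
Qed.

Lemma norm_w n : (0 < n)%N -> `|omega n| = 1.
Proof. by move=> hn; apply: (@unit_of_root _ n hn); apply: prim_expr_order; apply: (@omega_prim n hn). Qed.

Lemma wconj n (j k : 'I_n) : (0 < n)%N ->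
  (omega n ^+ (j * k))^* = omega n ^+ (j * rv k).
Proof.
move=> hn; set a := omega n ^+ (j * k); set b := omega n ^+ (j * rv k).
have ab : a * b = 1.
  rewrite /a /b -exprD -mulnDr mulnC exprM.
  move: (@rv_add n k); rewrite [(rv k + k)%N]addnC (prim_order_dvd (@omega_prim n hn)) => /eqP ->.
  by rewrite expr1n.
have na : `|a| = 1 by rewrite /a normrX norm_w // expr1n.
by rewrite -[a^*]mulr1 -ab mulrA [a^* * a]mulrC -normCK na expr1n mul1r.
Qed.

Notation sq n := (sqrtC (n%:R : algC)).

Lemma sq_conj n : (sq n)^* = sq n.
Proof. by apply: conj_Creal; apply: ger0_real; rewrite sqrtC_ge0 ler0n. Qed.

Lemma sq_sq n : sq n * sq n = n%:R.
Proof. by rewrite -expr2 sqrtCK. Qed.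

Lemma sq_neq0 n : (0 < n)%N -> sq n != 0.
Proof. by move=> hn; rewrite sqrtC_eq0 pnatr_eq0 -lt0n. Qed.

Lemma F_sym n : (fourier n)^T = fourier n.
Proof. by apply/matrixP => i j; rewrite !mxE mulnC. Qed.

Lemma fvE n (x : 'rV[algC]_n) : fourier_vec x = x *m fourier n.
Proof.
apply/rowP => i; rewrite !mxE; apply: eq_bigr => j _.
by rewrite mulrC /fourier !mxE mulnC.
Qed.

Lemma Fconj n (l c : 'I_n) : (0 < n)%N -> (fourier n l c)^* = fourier n l (rv c).
Proof. by move=> hn; rewrite !mxE rmorphM /= fmorphV /= sq_conj wconj. Qed.

Lemma FFc n : (0 < n)%N -> fourier n *m map_mx Num.conj (fourier n) = 1%:M.
Proof.
move=> hn; apply/matrixP => i k; rewrite !mxE.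
rewrite (eq_bigr (fun j : 'I_n => omega n ^+ (j * (i + rv k)) / (sq n * sq n))); last first.
  move=> j _; rewrite !mxE rmorphM /= fmorphV /= sq_conj wconj // invfM.
  by rewrite mulrACA -exprD; congr (_ ^+ _ * _); rewrite mulnDr mulnC.
rewrite -mulr_suml sum_w // dvd_rv rvK sq_sq.
by case: (i == k); rewrite ?mul0r // mulfV // pnatr_eq0 -lt0n.
Qed.

Definition Pm n : 'M[algC]_n := \matrix_(i, k) ((i == rv k)%:R).

Lemma FF n : (0 < n)%N -> fourier n *m fourier n = Pm n.
Proof.
move=> hn; apply/matrixP => i k; rewrite !mxE.
rewrite (eq_bigr (fun j : 'I_n => omega n ^+ (j * (i + k)) / (sq n * sq n))); last first.
  move=> j _; rewrite !mxE invfM.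
  by rewrite mulrACA -exprD; congr (_ ^+ _ * _); rewrite mulnDr mulnC.
rewrite -mulr_suml sum_w // dvd_rv sq_sq.
by case: (i == rv k); rewrite ?mul0r // mulfV // pnatr_eq0 -lt0n.
Qed.

Lemma mulPm n (x : 'rV[algC]_n) : x *m Pm n = \row_k x 0 (rv k).
Proof.
apply/rowP => k; rewrite !mxE (bigD1 (rv k)) //= big1 ?addr0; first by rewrite !mxE eqxx mulr1.
by move=> i /negbTE hi; rewrite !mxE hi mulr0.
Qed.

Definition add_ord {n} (i m : 'I_n) : 'I_n := Ordinal (ltn_pmod (i + m)%N (ord_pos i)).

Lemma cdiff_add n (i m : 'I_n) : cdiff i (add_ord i m) = m.
Proof.
apply/val_inj => /=; have := ltn_ord i; have := ltn_ord m => hm hi.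
rewrite -addnBA; last lia.
rewrite modnDml; have -> : (i + m + (n - i) = m + n)%N by lia.
by rewrite modnDr modn_small.
Qed.

Lemma add_cdiff n (i j : 'I_n) : add_ord i (cdiff i j) = j.
Proof.
apply/val_inj => /=; have := ltn_ord i; have := ltn_ord j => hj hi.
rewrite modnDmr; have -> : (i + (j + n - i) = j + n)%N by lia.
by rewrite modnDr modn_small.
Qed.

Lemma cdiff0 n (i j : 'I_n) : val i = 0%N -> cdiff i j = j.
Proof.
by move=> i0; apply/val_inj => /=; rewrite i0 subn0 modnDr modn_small.
Qed.

Lemma rv_cdiff n (i j : 'I_n) : rv (cdiff j i) = cdiff i j.
Proof.
apply/esym/eqP; rewrite -dvd_rv /dvdn /= modnDm.
have := ltn_ord i; have := ltn_ord j => hj hi.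
have -> : (j + n - i + (i + n - j) = n * 2)%N by lia.
by rewrite modnMr.
Qed.

Lemma circ_F n (x : 'rV[algC]_n) : (0 < n)%N ->
  circ x *m fourier n = fourier n *m diag_mx (sq n *: (x *m fourier n)).
Proof.
move=> hn; apply/matrixP => i k; rewrite mul_mx_diag !mxE.
rewrite (reindex (add_ord i)) /=; last by apply: onW_bij; exists (cdiff i) => m; rewrite ?cdiff_add ?add_cdiff.
rewrite mulrA divfK ?sq_neq0 // mulr_sumr; apply: eq_bigr => m _.
rewrite !mxE cdiff_add.
have -> : omega n ^+ ((i + m) %% n * k) = omega n ^+ (i * k) * omega n ^+ (m * k).
  rewrite -exprD -(prim_expr_mod (@omega_prim n hn)) modnMml.
  rewrite (prim_expr_mod (@omega_prim n hn)); congr (_ ^+ _); nia.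
ring.
Qed.

Definition Fc n := map_mx (fun z : algC => z^*) (fourier n).

Lemma adjmxE n (A : 'M[algC]_n) i j : adjmx A i j = (A j i)^*.
Proof. by rewrite !mxE. Qed.

Lemma adjmx_mul n (A B : 'M[algC]_n) : adjmx (A *m B) = adjmx B *m adjmx A.
Proof.
apply/matrixP => i j; rewrite !mxE rmorph_sum; apply: eq_bigr => k _.
by rewrite !mxE rmorphM mulrC.
Qed.

Lemma adjmxK n (A : 'M[algC]_n) : adjmx (adjmx A) = A.
Proof. by apply/matrixP => i j; rewrite !mxE conjCK. Qed.

Lemma adjmx_scale n (a : algC) (A : 'M[algC]_n) : adjmx (a *: A) = a^* *: adjmx A.
Proof. by apply/matrixP => i j; rewrite !mxE rmorphM. Qed.

Lemma adjmx_scalar n (a : algC) : adjmx (a%:M : 'M_n) = a^*%:M.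
Proof. by apply/matrixP => i j; rewrite !mxE rmorphMn eq_sym. Qed.

Lemma adjmx_diag n (d : 'rV[algC]_n) : adjmx (diag_mx d) = diag_mx (map_mx (fun z : algC => z^*) d).
Proof. by apply/matrixP => i j; rewrite !mxE rmorphMn eq_sym; case: eqP => // ->. Qed.

Lemma adjF n : adjmx (fourier n) = Fc n.
Proof. by apply/matrixP => i j; rewrite !mxE mulnC. Qed.

Lemma adjFc n : adjmx (Fc n) = fourier n.
Proof. by apply/matrixP => i j; rewrite !mxE conjCK mulnC. Qed.

Lemma FFc' n : (0 < n)%N -> fourier n *m Fc n = 1%:M.
Proof. exact: FFc. Qed.

Lemma FcF n : (0 < n)%N -> Fc n *m fourier n = 1%:M.
Proof. by move=> hn; apply: mulmx1C; apply: FFc'. Qed.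

Lemma conjug_eq n (M : 'M[algC]_n) c : (0 < n)%N ->
  (fourier n *m M *m Fc n = c%:M <-> M = c%:M).
Proof.
move=> hn; split => [h|->]; last by rewrite mul_mx_scalar -scalemxAl FFc' // scalemx1.
have -> : M = Fc n *m (fourier n *m M *m Fc n) *m fourier n.
  by rewrite !mulmxA FcF // mul1mx -mulmxA FcF // mulmx1.
by rewrite h mul_mx_scalar -scalemxAl FcF // scalemx1.
Qed.

Lemma diag_scalar n (d : 'rV[algC]_n) c : diag_mx d = c%:M <-> forall k, d 0 k = c.
Proof.
split => [h k|h].
  by have := congr1 (fun M : 'M[algC]_n => M k k) h; rewrite /= !mxE eqxx !mulr1n.
by apply/matrixP => i j; rewrite !mxE h.
Qed.

Definition rowu {n} (y : 'rV[algC]_n) := forall k, `|y 0 k| = 1.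

Definition Dm {n} (x : 'rV[algC]_n) : 'M[algC]_n := diag_mx (sq n *: (x *m fourier n)).

Lemma circ_dec n (x : 'rV[algC]_n) : (0 < n)%N -> circ x = fourier n *m Dm x *m Fc n.
Proof. by move=> hn; rewrite /Dm -circ_F // -mulmxA FFc' // mulmx1. Qed.

Lemma adj_circ n (x : 'rV[algC]_n) : (0 < n)%N ->
  adjmx (circ x) = fourier n *m adjmx (Dm x) *m Fc n.
Proof. by move=> hn; rewrite circ_dec // !adjmx_mul adjFc adjF mulmxA. Qed.

Lemma HHs n (x : 'rV[algC]_n) : (0 < n)%N ->
  circ x *m adjmx (circ x) = fourier n *m (Dm x *m adjmx (Dm x)) *m Fc n.
Proof.
move=> hn; rewrite adj_circ // circ_dec //.
by rewrite !mulmxA -[_ *m Fc n *m fourier n]mulmxA FcF // mulmx1.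
Qed.

Lemma HsH n (x : 'rV[algC]_n) : (0 < n)%N ->
  adjmx (circ x) *m circ x = fourier n *m (adjmx (Dm x) *m Dm x) *m Fc n.
Proof.
move=> hn; rewrite adj_circ // circ_dec //.
by rewrite !mulmxA -[_ *m Fc n *m fourier n]mulmxA FcF // mulmx1.
Qed.

Lemma DDs n (x : 'rV[algC]_n) :
  Dm x *m adjmx (Dm x) = diag_mx (\row_k (n%:R * `|(x *m fourier n) 0 k| ^+ 2)).
Proof.
rewrite /Dm adjmx_diag mulmx_diag; congr diag_mx; apply/rowP => k; rewrite !mxE.
by rewrite /= rmorphM /= sq_conj mulrACA sq_sq normCK.
Qed.

Lemma DsD n (x : 'rV[algC]_n) :
  adjmx (Dm x) *m Dm x = diag_mx (\row_k (n%:R * `|(x *m fourier n) 0 k| ^+ 2)).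
Proof.
rewrite /Dm adjmx_diag mulmx_diag; congr diag_mx; apply/rowP => k; rewrite !mxE.
by rewrite /= rmorphM /= sq_conj mulrACA sq_sq normCKC.
Qed.

Lemma diag_n n (y : 'rV[algC]_n) : (0 < n)%N ->
  (diag_mx (\row_k (n%:R * `|y 0 k| ^+ 2)) = n%:R%:M) <-> rowu y.
Proof.
move=> hn; rewrite diag_scalar; split => h k; have := h k; rewrite ?mxE.
  move=> e; apply/eqP; rewrite -(sqrp_eq1 (normr_ge0 _)); apply/eqP.
  by apply: (mulfI (x := n%:R)); rewrite ?pnatr_eq0 -?lt0n // mulr1.
by move=> ->; rewrite expr1n mulr1.
Qed.

Lemma key n (x : 'rV[algC]_n) : (0 < n)%N ->
  (circ x *m adjmx (circ x) = n%:R%:M /\ adjmx (circ x) *m circ x = n%:R%:M)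
  <-> rowu (x *m fourier n).
Proof.
move=> hn; rewrite HHs // HsH // !conjug_eq // DDs DsD diag_n //.
by split => [[]|h].
Qed.

Lemma circ_entry n (y : 'rV[algC]_n) i j : circ y i j = y 0 (cdiff i j).
Proof. by rewrite mxE. Qed.

Lemma circ_row0 n (y : 'rV[algC]_n) (hn : (0 < n)%N) k : circ y (Ordinal hn) k = y 0 k.
Proof. by rewrite circ_entry cdiff0. Qed.

Lemma unimod_circ n (y : 'rV[algC]_n) : (0 < n)%N -> unimodular (circ y) <-> rowu y.
Proof.
move=> hn; split => h k.
  by have := h (Ordinal hn) k; rewrite circ_row0.
by move=> j; rewrite circ_entry h.
Qed.

Lemma unitary_scale n (H : 'M[algC]_n) : (0 < n)%N ->
  unitary ((sq n)^-1 *: H) <->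
  (H *m adjmx H = n%:R%:M /\ adjmx H *m H = n%:R%:M).
Proof.
move=> hn; have s0 := sq_neq0 _ hn; have n0 : (n%:R : algC) != 0 by rewrite pnatr_eq0 -lt0n.
have c2 : (sq n)^-1 * ((sq n)^-1)^* = n%:R^-1.
  by rewrite fmorphV /= sq_conj -invfM sq_sq.
have E (M : 'M[algC]_n) : n%:R^-1 *: M = 1%:M <-> M = n%:R%:M.
  split => [h|->]; last by rewrite scale_scalar_mx (mulVf n0).
  have := congr1 (fun A : 'M[algC]_n => n%:R *: A) h; rewrite /= scalerA (mulfV n0) scale1r => ->.
  by rewrite scale_scalar_mx mulr1.
rewrite /unitary adjmx_scale -!scalemxAl -!scalemxAr !scalerA [_^* * _]mulrC c2.
by rewrite !E.
Qed.

Lemma in_sqrtU_iff n (H : 'M[algC]_n) : (0 < n)%N -> in_sqrtU H <-> unitary ((sq n)^-1 *: H).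
Proof.
move=> hn; have s0 := sq_neq0 _ hn; split => [[U [hU ->]]|h].
  by rewrite scalerA mulVf // scale1r.
by exists ((sq n)^-1 *: H); split => //; rewrite scalerA mulfV // scale1r.
Qed.

Lemma Ccirc_iff n (x : 'rV[algC]_n) : (0 < n)%N -> Ccirc x <-> rowu x /\ rowu (x *m fourier n).
Proof.
move=> hn; rewrite /Ccirc /complex_hadamard unimod_circ // unitary_scale // key //.
Qed.

Definition rvrow {n} (x : 'rV[algC]_n) : 'rV[algC]_n := \row_k x 0 (rv k).

Lemma FFrow n (x : 'rV[algC]_n) : (0 < n)%N -> x *m fourier n *m fourier n = rvrow x.
Proof. by move=> hn; rewrite -mulmxA FF // mulPm. Qed.

Lemma rowu_rv n (x : 'rV[algC]_n) : rowu (rvrow x) <-> rowu x.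
Proof.
split => h k; last by rewrite mxE h.
by have := h (rv k); rewrite mxE rvK.
Qed.

Lemma rvrowK n (x : 'rV[algC]_n) : rvrow (rvrow x) = x.
Proof. by apply/rowP => k; rewrite !mxE rvK. Qed.

Lemma rvrowF n (x : 'rV[algC]_n) : (0 < n)%N -> rvrow x *m fourier n = rvrow (x *m fourier n).
Proof. by move=> hn; rewrite -!FFrow // -!mulmxA. Qed.

Lemma F4 n (x : 'rV[algC]_n) : (0 < n)%N ->
  x *m fourier n *m fourier n *m fourier n *m fourier n = x.
Proof. by move=> hn; rewrite FFrow // FFrow // rvrowK. Qed.

Lemma Finj n (x y : 'rV[algC]_n) : (0 < n)%N -> x *m fourier n = y *m fourier n -> x = y.
Proof.
move=> hn h; rewrite -[x]mulmx1 -[y]mulmx1 -(FFc' _ hn) !mulmxA.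
by rewrite h.
Qed.

Lemma circ_inj n (x y : 'rV[algC]_n) : (0 < n)%N -> circ x = circ y -> x = y.
Proof.
move=> hn h; apply/rowP => k.
by have := congr1 (fun M : 'M[algC]_n => M (Ordinal hn) k) h; rewrite /= !circ_row0.
Qed.

Lemma adj_PhiE n (x : 'rV[algC]_n) : (0 < n)%N ->
  adjmx (circ (x *m fourier n)) = circ (map_mx (fun z : algC => z^*) x *m fourier n).
Proof.
move=> hn; apply/matrixP => i j; rewrite adjmxE !circ_entry !mxE rmorph_sum.
apply: eq_bigr => l _; rewrite !mxE rmorphM /= rmorphM /= fmorphV /= sq_conj (wconj _ l (cdiff j i) hn).
by rewrite rv_cdiff.
Qed.

Lemma sa_iff n (x : 'rV[algC]_n) : (0 < n)%N ->
  adjmx (Phi x) = Phi x <-> forall k, x 0 k \is Num.real.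
Proof.
move=> hn; rewrite /Phi fvE adj_PhiE //; split => [h k|h].
  have := Finj _ _ _ hn (circ_inj _ _ _ hn h) => /(congr1 (fun v : 'rV[algC]_n => v 0 k)).
  by rewrite /= mxE CrealE => ->.
congr (circ (_ *m _)); apply/rowP => k; rewrite mxE.
by apply: conj_Creal.
Qed.

Lemma pm1_iff (z : algC) : (z = 1 \/ z = -1) <-> (z \is Num.real /\ `|z| = 1).
Proof.
split => [[]->|[zR nz]]; rewrite ?rpredN ?rpred1 ?normrN ?normr1 //.
by apply: unit_real => //; apply/Creal_ImP.
Qed.

Lemma adj_real n (O : 'M[algC]_n) : (forall i j, O i j \is Num.real) -> adjmx O = O^T.
Proof. by move=> h; apply/matrixP => i j; rewrite !mxE conj_Creal. Qed.

Lemma sq_real n : sq n \is Num.real.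
Proof. by apply: ger0_real; rewrite sqrtC_ge0 ler0n. Qed.

Theorem theorem3p2 (n : nat) (hn : (0 < n)%N) :
  (* Phi maps C^circ_n(oo) into itself *)
  (forall x : 'rV[algC]_n, Ccirc x -> Ccirc (fourier_vec x)) /\
  (* injectively *)
  (forall x y : 'rV[algC]_n, Ccirc x -> Ccirc y -> Phi x = Phi y -> circ x = circ y) /\
  (* and onto C^circ_n(oo) *)
  (forall y : 'rV[algC]_n, Ccirc y -> exists x, Ccirc x /\ Phi x = circ y) /\
  (* C^circ_n(2) is mapped into C^circ,sa_n(oo) *)
  (forall x : 'rV[algC]_n, Ccirc2 x -> Ccirc_sa (fourier_vec x)) /\
  (* and onto it *)
  (forall y : 'rV[algC]_n, Ccirc_sa y -> exists x, Ccirc2 x /\ Phi x = circ y) /\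
  (* H in sqrt n U(n) iff Phi(H) has unimodular entries *)
  (forall x : 'rV[algC]_n, in_sqrtU (circ x) <-> unimodular (Phi x)) /\
  (* H in sqrt n O(n) iff Phi(H) self-adjoint with unimodular entries *)
  (forall x : 'rV[algC]_n,
      in_sqrtO (circ x) <-> (adjmx (Phi x) = Phi x /\ unimodular (Phi x))).
Proof.
have CF x := Ccirc_iff n x hn.
set F := fourier n.
have P1 (x : 'rV[algC]_n) : Ccirc x -> Ccirc (fourier_vec x).
  move=> /(CF x) [h1 h2]; rewrite fvE; apply/(CF (x *m F)); split => //.
  by rewrite FFrow //; apply/rowu_rv.
have P3 (y : 'rV[algC]_n) : Ccirc y -> Ccirc (y *m F *m F *m F) /\ Phi (y *m F *m F *m F) = circ y.
  move=> hy; split; last by rewrite /Phi fvE F4.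
  move: hy => /(CF y) [h1 h2]; apply/(CF (y *m F *m F *m F)); rewrite F4 //; split => //.
  by rewrite FFrow //; apply/rowu_rv.
have P6 (x : 'rV[algC]_n) : in_sqrtU (circ x) <-> unimodular (Phi x).
  rewrite /Phi fvE; split.
    by move/(in_sqrtU_iff _ _ hn)/(unitary_scale _ _ hn)/(key _ _ hn)/(unimod_circ _ _ hn).
  by move/(unimod_circ _ _ hn)/(key _ _ hn)/(unitary_scale _ _ hn)/(in_sqrtU_iff _ _ hn).
split; first exact: P1.
split.
  move=> x y _ _; rewrite /Phi !fvE => /(circ_inj _ _ _ hn) /(Finj _ _ _ hn) ->.
  by [].
split.
  by move=> y /P3 [h1 h2]; exists (y *m F *m F *m F).
split.
  move=> x [hx h2]; split; first exact: P1.
  rewrite -/(Phi x) sa_iff // => k.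
  by have := h2 (Ordinal hn) k; rewrite circ_row0 => /pm1_iff [].
split.
  move=> y [hy sy]; have [hx ex] := P3 y hy; exists (y *m F *m F *m F); split => //.
  split => // i j; rewrite circ_entry; apply/pm1_iff; split.
    by move: (y *m F *m F *m F) ex => z ez; apply: ((sa_iff _ z hn).1 _ (cdiff i j)); rewrite ez.
  by move: hx => /(CF (y *m F *m F *m F)) [].
split; first exact: P6.
move=> x; split.
  move=> [O [[Or [OOt OtO]] HE]].
  have xr : forall k, x 0 k \is Num.real.
    by move=> k; rewrite -(circ_row0 _ x hn) HE mxE rpredM ?sq_real.
  split; first by rewrite sa_iff.
  apply/P6; exists O; split => //; by rewrite /unitary adj_real.
move=> [sa um]; have xr := (sa_iff _ x hn).1 sa.
have [U [uU HE]] := (P6 x).2 um.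
have Ur : forall i j, U i j \is Num.real.
  move=> i j; have -> : U = (sq n)^-1 *: circ x.
    by rewrite HE scalerA mulVf ?scale1r // sq_neq0.
  by rewrite mxE circ_entry rpredM ?rpredV ?sq_real.
exists U; split => //; split => //; by rewrite -adj_real.
Qed.
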